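(* Let $(Q,\cdot,e)$ be a double Ward quasigroup of finite order $n$ which is $k$-translatable (with respect to some ordering of $Q$ as $1,2,\ldots,n$), where $1\le k<n$. Then $k=n-1$ and $(Q,\cdot,e)$ is induced by a cyclic group, i.e. the group $(Q,\diamond)$ with $x\diamond y=(e\cdot x)\cdot(e\cdot y)$ is cyclic.
   Context: A double Ward quasigroup $(Q,\cdot,e)$ is a quasigroup (a magma in which $ax=b$, $ya=b$ have unique solutions) with an element $e$ such that $(ee\cdot xz)(ey\cdot z)=xy$ for all $x,y,z$; the operation $x\diamond y=(ex)(ey)$ makes $Q$ a group with identity $e$, and $xy=x^{-1}\diamond y^{-1}$. With $Q=\{1,\ldots,n\}$ ordered naturally and $[i]_n$ denoting $i$ modulo $n$ (with $0$ identified with $n$), a magma $(Q,\cdot)$ is $k$-translatable ($1\le k<n$) if $i\cdot j=[i+1]_n\cdot[j+k]_n$ for all $i,j\in Q$; equivalently each row of the multiplication table is obtained from the previous one by moving its last $k$ entries to the front. *)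

(* Defs.v *)
From mathcomp Require Import all_boot.
Set Implicit Arguments. Unset Strict Implicit. Unset Printing Implicit Defensive.

Definition quasigroup (T : Type) (mul : T -> T -> T) : Prop :=
  forall a b : T, (exists! x, mul a x = b) /\ (exists! y, mul y a = b).

Definition double_ward (T : Type) (mul : T -> T -> T) (e : T) : Prop :=
  forall x y z : T, mul (mul (mul e e) (mul x z)) (mul (mul e y) z) = mul x y.

(* k-translatability w.r.t. an ordering [ord : T -> 'I_n] of T.
   Positions are 0,...,n-1 (position p corresponds to the paper's p+1);
   i.j = [i+1]_n . [j+k]_n. *)
Definition k_translatable (T : Type) (n : nat) (ord : T -> 'I_n)
    (mul : T -> T -> T) (k : nat) : Prop :=
  forall x y x' y' : T,
    val (ord x') = (val (ord x) + 1) %% n ->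
    val (ord y') = (val (ord y) + k) %% n ->
    mul x y = mul x' y'.

Definition diamond (T : Type) (mul : T -> T -> T) (e : T) (x y : T) : T :=
  mul (mul e x) (mul e y).

Definition diamond_cyclic (T : Type) (mul : T -> T -> T) (e : T) : Prop :=
  exists g : T, forall x : T, exists m : nat, x = iter m (diamond mul e g) e.

(* Main.v *)
Require Import Defs.
From mathcomp Require Import all_boot.
From mathcomp Require Import all_algebra.
From mathcomp Require Import ring zify.
Import GRing.Theory.
Local Open Scope ring_scope.

Theorem theorem4p14 (T : finType) (mul : T -> T -> T) (e : T)
    (n k : nat) (ord : T -> 'I_n) :
  bijective ord ->
  quasigroup mul ->
  double_ward mul e ->
  (1 <= k < n)%N ->
  k_translatable ord mul k ->
  k = n.-1 /\ diamond_cyclic mul e.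
Proof.
case: n ord => [|[|n']] ord; try by move=> _ _ _ /andP[? ?]; lia.
move=> [finv fK Kf] hq hdw /andP[k1 kn] ht.
pose R := 'I_n'.+2.
have lc : forall a x1 x2, mul a x1 = mul a x2 -> x1 = x2.
  move=> a x1 x2 h; case: (hq a (mul a x1)) => [[x [_ hu]] _].
  by rewrite -(hu x1) // (hu x2).
have rc : forall a x1 x2, mul x1 a = mul x2 a -> x1 = x2.
  move=> a x1 x2 h; case: (hq a (mul x1 a)) => [_ [x [_ hu]]].
  by rewrite -(hu x1) // (hu x2).
have finj : forall i j : R, finv i = finv j -> i = j.
  by move=> i j h; rewrite -(Kf i) -(Kf j) h.
have oinj : forall x y, ord x = ord y -> x = y.
  by move=> x y h; rewrite -(fK x) -(fK y) h.
have shift1 : forall i j : R, mul (finv i) (finv j) = mul (finv (i+1)) (finv (j + k%:R)).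
  move=> i j; apply: ht; rewrite !Kf /=.
    by rewrite modnDmr.
  by rewrite (val_Zp_nat (p := n'.+2)) // modnDmr.
have shiftm : forall (m : nat) (i j : R),
    mul (finv i) (finv j) = mul (finv (i + m%:R)) (finv (j + m%:R * k%:R)).
  elim=> [|m IH] i j; first by rewrite !mul0r !addr0.
  rewrite IH shift1; congr (mul (finv _) (finv _)); rewrite mulrS; ring.
pose r : R := k%:R.
pose H (t : R) : R := ord (mul (finv 0) (finv t)).
have hM : forall x y, ord (mul x y) = H (ord y - r * ord x).
  move=> x y; rewrite /H -{1}(fK x) -{1}(fK y) (shiftm (val (- ord x))).
  rewrite natr_Zp; congr (ord (mul (finv _) (finv _))); rewrite /r; ring.
have Hinj : forall a b, H a = H b -> a = b.
  by move=> a b /oinj /lc /finj.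
pose c := ord e.
have E : forall x y z : R,
    H (z - r * H (y - r * c)) - r * H (H (z - r * x) - r * H (c - r * c)) = y - r * x.
  move=> x y z; apply: Hinj.
  have := congr1 ord (hdw (finv x) (finv y) (finv z)).
  by rewrite !hM !Kf.
have rinj : forall i j : R, r * i = r * j -> i = j.
  move=> i j h; apply: finj; apply: (rc (finv 0)); apply: oinj.
  by rewrite !hM !Kf h.
have [x0 hx0] : exists x0, r * x0 = 1.
  have := injF_onto (rinj : injective (fun i : R => r * i)) 1.
  by case/codomP => x0 ->; exists x0.
have hHs : forall v x, H (v + r * x) = H v - r * x.
  move=> v x; pose g := H (0 - r * c).
  have e1 := E x 0 (v + r * g + r * x).
  have e0 := E 0 0 (v + r * g).
  rewrite (_ : v + r * g + r * x - r * x = v + r * g) in e1; last by ring.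
  rewrite (_ : v + r * g - r * 0 = v + r * g) in e0; last by ring.
  rewrite -/g (_ : v + r * g + r * x - r * g = v + r * x) in e1; last by ring.
  rewrite -/g (_ : v + r * g - r * g = v) in e0; last by ring.
  move/eqP: e1; rewrite subr_eq => /eqP ->.
  move/eqP: e0; rewrite subr_eq => /eqP ->.
  ring.
have [b hb] : exists b, forall v, H v = b - v.
  exists (H 0) => v.
  rewrite (_ : v = 0 + r * (v * x0)) ?hHs; last by rewrite mulrA (mulrC r) -mulrA hx0; ring.
  by rewrite mulrA (mulrC r) -mulrA hx0 !mulr1 add0r.
have hr : r = -1.
  pose L (z : R) := (b - (z - r * (b - (0 - r * c)))) -
    r * (b - ((b - (z - r * 0)) - r * (b - (c - r * c)))).
  have hL : forall z, L z = 0 - r * 0 by move=> z; rewrite /L -!hb; apply: E.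
  have : L 1 - L 0 = -1 - r by rewrite /L; ring.
  rewrite !hL subrr => /eqP; rewrite eq_sym subr_eq0 => /eqP <-.
  by [].
split.
  have : (k.+1%:R : R) = 0 by rewrite mulrS -/r hr; ring.
  move/(congr1 (fun x : R => nat_of_ord x)); rewrite (val_Zp_nat (p := n'.+2)) //= => /eqP.
  rewrite -/(dvdn _ _) => hd.
  have : (n'.+2 <= k.+1)%N by apply: dvdn_leq.
  lia.
exists (finv (1 + b - c - c)) => x.
have hd : forall y, ord (diamond mul e (finv (1 + b - c - c)) y) = ord y + 1.
  move=> y; rewrite /diamond !hM !hb Kf hr -/c; ring.
have hit : forall m, ord (iter m (diamond mul e (finv (1 + b - c - c))) e) = c + m%:R.
  elim=> [|m IH] /=; first by rewrite addr0.
  by rewrite hd IH mulrS; ring.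
exists (val (ord x - c)); apply: oinj; rewrite hit natr_Zp; ring.
Qed.
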